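(* In the reset-button collector, let $s_n:=\phi_n(q_n)=\mathbb Eq_n^{C_n}$. Then $\mathbb ET_n=\dfrac{1-s_n}{\rho_ns_n}$.
   Context: Reset-button collector: fix $n\ge1$. There are standard coupons $1,\dots,n$ and a reset coupon. At each discrete time $t=1,2,\dots$ one coupon is sampled independently: the reset coupon with probability $\rho_n\in(0,1)$, standard coupon $i$ with probability $p_{i,n}>0$, where $\sum_ip_{i,n}=q_n:=1-\rho_n$. Starting from the empty collection, drawn standard coupons are added; a reset empties the collection and collecting continues. $T_n$ is the first time all $n$ standard coupons are present. $C_n$ is the ordinary coupon collector completion time (number of i.i.d. draws until all types seen) with type probabilities $p_{i,n}/q_n$, and $\phi_n(z)=\mathbb Ez^{C_n}$. *)

(* Defs.v *)
From mathcomp Require Import all_boot all_order all_algebra.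
From mathcomp Require Import all_classical all_reals all_analysis.
Set Implicit Arguments. Unset Strict Implicit. Unset Printing Implicit Defensive.
Import Order.TTheory GRing.Theory Num.Theory numFieldNormedType.Exports.
Local Open Scope ring_scope.

(* A draw is an [option 'I_n]: [None] is the reset coupon, [Some i] the
   standard coupon i. *)
Definition reset_step (n : nat) (A : {set 'I_n}) (c : option 'I_n) : {set 'I_n} :=
  if c is Some i then i |: A else finset.set0.

Definition coll_state (n : nat) (s : seq (option 'I_n)) : {set 'I_n} :=
  foldl (@reset_step n) finset.set0 s.

Definition completes_at (n : nat) (s : seq (option 'I_n)) : bool :=
  (coll_state s == [set: 'I_n]) &&
  [forall k : 'I_(size s), coll_state (take k s) != [set: 'I_n]].

Definition reset_weight (R : realType) (n : nat) (rho : R) (p : 'I_n -> R)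
  (c : option 'I_n) : R := if c is Some i then p i else rho.

Definition probT (R : realType) (n : nat) (rho : R) (p : 'I_n -> R) (t : nat) : R :=
  \sum_(s : t.-tuple (option 'I_n) | completes_at s)
     \prod_(c <- s) reset_weight rho p c.

Definition expT (R : realType) (n : nat) (rho : R) (p : 'I_n -> R) : \bar R :=
  (\sum_(0 <= t <oo) ((t%:R * probT rho p t)%:E))%E.

(* P(C_n = k): ordinary coupon collector with type probabilities p_i / q
   (no resets: a sequence of standard coupons is a draw sequence without None) *)
Definition probC (R : realType) (n : nat) (q : R) (p : 'I_n -> R) (k : nat) : R :=
  \sum_(s : k.-tuple 'I_n | completes_at (map Some s))
     \prod_(i <- s) (p i / q).

Definition phiC (R : realType) (n : nat) (q : R) (p : 'I_n -> R) (z : R) : R :=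
  limn (series (fun k => z ^+ k * probC q p k)).

(* Main.v *)
Require Import Defs.
From mathcomp Require Import all_boot all_order all_algebra.
From mathcomp Require Import all_classical all_reals all_analysis.
From mathcomp Require Import ring lra.
Import Order.TTheory GRing.Theory Num.Theory numFieldNormedType.Exports.
Set Implicit Arguments. Unset Strict Implicit. Unset Printing Implicit Defensive.
Local Open Scope ring_scope.

Lemma theadE_gen (X : Type) N (u : N.+1.-tuple X) : thead u :: behead u = u.
Proof. by case: u => [[|y t] Hs]. Qed.

Lemma sum_tuple_rcons (R : realType) (X : finType) N (F : seq X -> R) :
  \sum_(s : N.+1.-tuple X) F s = \sum_(s : N.-tuple X) \sum_(x : X) F (rcons s x).
Proof.
rewrite pair_big /=.
rewrite (reindex (fun p : N.-tuple X * X => [tuple of rcons p.1 p.2])) //=.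
exists (fun u : N.+1.-tuple X => ([tuple of belast (thead u) (behead u)], last (thead u) (behead u))).
- move=> [s x] _ /=.
  set u := [tuple of rcons s x].
  have E : thead u :: behead u = rcons s x.
    by rewrite theadE_gen.
  have := E; rewrite lastI => /rcons_inj [E1 E2].
  by congr pair => //; apply/val_inj; rewrite /= E1.
- move=> u _ /=; apply/val_inj => /=. by rewrite -lastI theadE_gen.
Qed.

Lemma forall_ord_iota m (P : pred nat) : [forall k : 'I_m, P k] = all P (iota 0 m).
Proof.
apply/forallP/allP => [H j | H k].
- rewrite mem_iota add0n => /andP[_ jm]; exact: (H (Ordinal jm)).
- by apply: H; rewrite mem_iota add0n ltn_ord.
Qed.

Lemma sum_option (R : realType) n (F : option 'I_n -> R) :
  \sum_(c : option 'I_n) F c = F None + \sum_(i : 'I_n) F (Some i).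
Proof.
rewrite (bigD1 None) //=; congr (_ + _).
rewrite (reindex_omap Some id) /=; last by case.
by apply: eq_bigl => i; rewrite eqxx.
Qed.

Definition stt n (X : finType) (emb : X -> option 'I_n) (s : seq X) : {set 'I_n} :=
  coll_state (map emb s).
Definition alv n (X : finType) (emb : X -> option 'I_n) (s : seq X) : bool :=
  all (fun k => stt emb (take k s) != [set: 'I_n]) (iota 0 (size s).+1).
Definition aS (R : realType) n (X : finType) (emb : X -> option 'I_n) (wt : X -> R)
  N (f : {set 'I_n} -> R) : R :=
  \sum_(s : N.-tuple X | alv emb s) (\prod_(x <- s) wt x) * f (stt emb s).
Definition nxt n (X : finType) (emb : X -> option 'I_n) (A : {set 'I_n}) (x : X) :=
  reset_step A (emb x).
Definition Pop (R : realType) n (X : finType) (emb : X -> option 'I_n) (wt : X -> R)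
  (f : {set 'I_n} -> R) (A : {set 'I_n}) : R :=
  \sum_(x : X) wt x * (if nxt emb A x == [set: 'I_n] then 0 else f (nxt emb A x)).
Definition kil (R : realType) n (X : finType) (emb : X -> option 'I_n) (wt : X -> R)
  (A : {set 'I_n}) : R :=
  \sum_(x : X) wt x * (nxt emb A x == [set: 'I_n])%:R.

Lemma set0_neqT n : (0 < n)%N -> (finset.set0 : {set 'I_n}) != [set: 'I_n].
Proof.
move=> n0; apply/eqP => E; have : Ordinal n0 \in [set: 'I_n] by rewrite inE.
by rewrite -E inE.
Qed.

Lemma stt_rcons n (X : finType) (emb : X -> option 'I_n) s x :
  stt emb (rcons s x) = nxt emb (stt emb s) x.
Proof. by rewrite /stt /coll_state map_rcons foldl_rcons. Qed.

Lemma stt_nil n (X : finType) (emb : X -> option 'I_n) : stt emb [::] = finset.set0.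
Proof. by []. Qed.

Lemma take_rcons_le (X : Type) (s : seq X) x k : (k <= size s)%N ->
  take k (rcons s x) = take k s.
Proof. by move=> H; rewrite -cats1 takel_cat. Qed.

Lemma all_take_rcons n (X : finType) (emb : X -> option 'I_n) s x :
  all (fun k => stt emb (take k (rcons s x)) != [set: 'I_n]) (iota 0 (size s).+1)
  = alv emb s.
Proof.
apply: eq_in_all => k; rewrite mem_iota add0n ltnS => /andP[_ Hk].
by rewrite take_rcons_le.
Qed.

Lemma alv_rcons n (X : finType) (emb : X -> option 'I_n) s x :
  alv emb (rcons s x) = alv emb s && (nxt emb (stt emb s) x != [set: 'I_n]).
Proof.
rewrite /alv size_rcons -addn1 iotaD all_cat all_take_rcons /= add0n andbT.
by rewrite take_oversize ?size_rcons // stt_rcons.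
Qed.

Lemma alv_stt n (X : finType) (emb : X -> option 'I_n) s :
  alv emb s -> stt emb s != [set: 'I_n].
Proof.
move=> /allP /(_ (size s)); rewrite take_size; apply.
by rewrite mem_iota add0n ltnS leqnn.
Qed.

Lemma alv_nil n (X : finType) (emb : X -> option 'I_n) : (0 < n)%N ->
  alv emb [::].
Proof. by move=> n0; rewrite /alv /= andbT; apply: set0_neqT. Qed.

Lemma completes_rcons n (X : finType) (emb : X -> option 'I_n) s x :
  completes_at (map emb (rcons s x)) =
  alv emb s && (nxt emb (stt emb s) x == [set: 'I_n]).
Proof.
rewrite /completes_at (forall_ord_iota _ (fun k => coll_state (take k (map emb (rcons s x))) != [set: 'I_n])) size_map size_rcons.
have -> : all (fun k => coll_state (take k (map emb (rcons s x))) != [set: 'I_n])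
   (iota 0 (size s).+1) =
   all (fun k => stt emb (take k (rcons s x)) != [set: 'I_n]) (iota 0 (size s).+1).
  by apply: eq_all => k; rewrite /stt map_take.
rewrite all_take_rcons andbC; congr (_ && _).
by rewrite -stt_rcons.
Qed.

Lemma completes_nil n (X : finType) (emb : X -> option 'I_n) : (0 < n)%N ->
  completes_at (map emb [::]) = false.
Proof.
by move=> n0; rewrite /completes_at /=; rewrite (negbTE (set0_neqT n0)).
Qed.

Lemma aS_step (R : realType) n (X : finType) (emb : X -> option 'I_n) (wt : X -> R) N f :
  aS emb wt N.+1 f = aS emb wt N (Pop emb wt f).
Proof.
rewrite /aS big_mkcond.
rewrite (sum_tuple_rcons _ (fun s : seq X => if alv emb s then (\prod_(x <- s) wt x) * f (stt emb s) else 0)).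
rewrite [RHS]big_mkcond; apply: eq_bigr => s _.
case As: (alv emb s).
- rewrite /Pop mulr_sumr; apply: eq_bigr => x _.
  rewrite alv_rcons As /= stt_rcons big_rcons /=.
  by case: eqP => _ /=; ring.
- by apply: big1 => x _; rewrite alv_rcons As.
Qed.

Lemma comp_step (R : realType) n (X : finType) (emb : X -> option 'I_n) (wt : X -> R) N :
  \sum_(s : N.+1.-tuple X | completes_at (map emb s)) \prod_(x <- s) wt x =
  aS emb wt N (kil emb wt).
Proof.
rewrite /aS big_mkcond.
rewrite (sum_tuple_rcons _ (fun s : seq X => if completes_at (map emb s) then (\prod_(x <- s) wt x) else 0)).
rewrite [RHS]big_mkcond; apply: eq_bigr => s _.
case As: (alv emb s).
- rewrite /kil mulr_sumr; apply: eq_bigr => x _.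
  rewrite completes_rcons As /= big_rcons /=.
  by case: eqP => _ /=; ring.
- by apply: big1 => x _; rewrite completes_rcons As.
Qed.

Lemma aS0 (R : realType) n (X : finType) (emb : X -> option 'I_n) (wt : X -> R) f :
  (0 < n)%N -> aS emb wt 0 f = f finset.set0.
Proof.
move=> n0; rewrite /aS (big_pred1 [tuple]).
  by rewrite big_nil mul1r.
by move=> s; rewrite [s]tuple0 alv_nil //=; apply/esym/eqP.
Qed.

Lemma comp0 (R : realType) n (X : finType) (emb : X -> option 'I_n) (wt : X -> R) :
  (0 < n)%N -> \sum_(s : 0.-tuple X | completes_at (map emb s)) \prod_(x <- s) wt x = 0.
Proof.
move=> n0; rewrite big_pred0 // => s; by rewrite tuple0 completes_nil.
Qed.

Lemma aS_lin (R : realType) n (X : finType) (emb : X -> option 'I_n) (wt : X -> R) N f g a b :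
  aS emb wt N (fun A => a * f A + b * g A) = a * aS emb wt N f + b * aS emb wt N g.
Proof.
rewrite /aS !mulr_sumr -big_split; apply: eq_bigr => s _ /=; ring.
Qed.

Lemma aS_ext (R : realType) n (X : finType) (emb : X -> option 'I_n) (wt : X -> R) N f g :
  (forall A, A != [set: 'I_n] -> f A = g A) -> aS emb wt N f = aS emb wt N g.
Proof.
move=> H; apply: eq_bigr => s As; by rewrite H // alv_stt.
Qed.

Lemma aS_le (R : realType) n (X : finType) (emb : X -> option 'I_n) (wt : X -> R) N f g :
  (forall x, 0 <= wt x) ->
  (forall A, A != [set: 'I_n] -> f A <= g A) -> aS emb wt N f <= aS emb wt N g.
Proof.
move=> w0 H; apply: ler_sum => s As; apply: ler_wpM2l.
  by apply: prodr_ge0 => x _.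
by rewrite H // alv_stt.
Qed.

Lemma Pop_const (R : realType) n (X : finType) (emb : X -> option 'I_n) (wt : X -> R) c A :
  Pop emb wt (fun _ => c) A = c * (\sum_x wt x - kil emb wt A).
Proof.
rewrite /Pop /kil mulrBr !mulr_sumr -sumrB; apply: eq_bigr => x _.
by case: eqP => _ /=; ring.
Qed.

Lemma Pop_lin (R : realType) n (X : finType) (emb : X -> option 'I_n) (wt : X -> R) f g a b A :
  Pop emb wt (fun A => a * f A + b * g A) A = a * Pop emb wt f A + b * Pop emb wt g A.
Proof.
rewrite /Pop !mulr_sumr -big_split; apply: eq_bigr => x _ /=.
by case: eqP => _ /=; ring.
Qed.

Fixpoint sigk (R : realType) n (p : 'I_n -> R) (k : nat) (A : {set 'I_n}) : R :=
  if k is k'.+1 then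
    (\sum_(i | i \notin A) p i * sigk p k' (i |: A)) / (1 - \sum_(i in A) p i)
  else 1.
Definition sig (R : realType) n (p : 'I_n -> R) (A : {set 'I_n}) : R := sigk p #|~: A| A.

Lemma denomE (R : realType) n (p : 'I_n -> R) rho (A : {set 'I_n}) :
  \sum_(i < n) p i = 1 - rho ->
  1 - \sum_(i in A) p i = rho + \sum_(i | i \notin A) p i.
Proof.
move=> hs; rewrite (bigID (fun i => i \in A)) /= in hs. lra.
Qed.

Lemma card_setU1C n (A : {set 'I_n}) i : i \notin A -> #|~: A| = #|~: (i |: A)|.+1.
Proof.
move=> Hi; rewrite (finset.cardsD1 i (~: A)) inE Hi /= add1n; congr (_.+1).
by apply: eq_card => j; rewrite !inE negb_or andbC.
Qed.

Lemma setU1_in n (A : {set 'I_n}) i : i \in A -> i |: A = A.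
Proof. by move=> Hi; apply/finset.setUidPr; rewrite finset.sub1set. Qed.

Lemma sig_full (R : realType) n (p : 'I_n -> R) : sig p [set: 'I_n] = 1.
Proof. by rewrite /sig finset.setCT finset.cards0. Qed.

Lemma sigk_bounds (R : realType) n (p : 'I_n -> R) rho :
  0 < rho -> (forall i, 0 < p i) -> \sum_(i < n) p i = 1 - rho ->
  forall k A, #|~: A| = k -> 0 < sigk p k A <= 1.
Proof.
move=> hr hp hs; elim => [|k IH] A hA /=; first by rewrite ltr01 lexx.
have Hi : forall i, i \notin A -> 0 < sigk p k (i |: A) <= 1.
  by move=> i Hi; apply: IH; move: hA; rewrite (card_setU1C Hi) => -[].
have [i0 Hi0] : exists i0, i0 \in ~: A.
  by apply/card_gt0P; rewrite hA.
rewrite inE in Hi0.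
rewrite (denomE _ hs).
have Dp : 0 < rho + \sum_(i | i \notin A) p i.
  by apply: ltr_wpDr => //; apply: sumr_ge0 => i _; apply: ltW.
have Nle : \sum_(i | i \notin A) p i * sigk p k (i |: A) <= \sum_(i | i \notin A) p i.
  apply: ler_sum => i HiA; have /andP[_ h1] := Hi i HiA.
  by rewrite ler_piMr // ltW.
have Ngt : 0 < \sum_(i | i \notin A) p i * sigk p k (i |: A).
  rewrite (bigD1 i0) //=; apply: ltr_wpDr.
    apply: sumr_ge0 => i /andP[HiA _]; have /andP[h0 _] := Hi i HiA.
    by apply: mulr_ge0; apply: ltW.
  by have /andP[h0 _] := Hi i0 Hi0; apply: mulr_gt0.
apply/andP; split; first by apply: divr_gt0.
rewrite ler_pdivrMr // mul1r; apply: (le_trans Nle); lra.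
Qed.

Lemma sig_bounds (R : realType) n (p : 'I_n -> R) rho :
  0 < rho -> (forall i, 0 < p i) -> \sum_(i < n) p i = 1 - rho ->
  forall A, 0 < sig p A <= 1.
Proof. by move=> hr hp hs A; apply: (sigk_bounds hr hp hs). Qed.

Lemma sig_eq (R : realType) n (p : 'I_n -> R) rho :
  0 < rho -> (forall i, 0 < p i) -> \sum_(i < n) p i = 1 - rho ->
  forall A, A != [set: 'I_n] -> sig p A = \sum_(i < n) p i * sig p (i |: A).
Proof.
move=> hr hp hs A hA.
have [k hk] : exists k, #|~: A| = k.+1.
  case E: #|~: A| => [|k]; last by exists k.
  move/eqP: E; rewrite finset.cards_eq0 => /eqP E.
  by move: hA; rewrite -[A]finset.setCK E finset.setC0 eqxx.
have Nsum : \sum_(i | i \notin A) p i * sigk p k (i |: A) =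
            \sum_(i | i \notin A) p i * sig p (i |: A).
  apply: eq_bigr => i HiA; rewrite /sig.
  by move: hk; rewrite (card_setU1C HiA) => -[->].
have Dp : 0 < rho + \sum_(i | i \notin A) p i.
  by apply: ltr_wpDr => //; apply: sumr_ge0 => i _; apply: ltW.
have sigA : sig p A = (\sum_(i | i \notin A) p i * sig p (i |: A)) / (1 - \sum_(i in A) p i).
  by rewrite /sig hk /= Nsum.
rewrite (bigID (fun i => i \in A)) /=.
have -> : \sum_(i in A) p i * sig p (i |: A) = (\sum_(i in A) p i) * sig p A.
  by rewrite mulr_suml; apply: eq_bigr => i HiA; rewrite setU1_in.
move: sigA; rewrite (denomE _ hs) => sigA.
have hD := denomE A hs.
set S := \sum_(i | i \notin A) p i * sig p (i |: A) in sigA *.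
set SA := \sum_(i in A) p i in hD *.
set SN := \sum_(i | i \notin A) p i in hD Dp sigA.
rewrite sigA.
have HD : SA = 1 - (rho + SN) by lra.
rewrite HD; field; lra.
Qed.

Lemma aS_scale (R : realType) n (X : finType) (emb : X -> option 'I_n) (wt : X -> R) N f a :
  aS emb wt N (fun A => a * f A) = a * aS emb wt N f.
Proof. rewrite /aS mulr_sumr; apply: eq_bigr => s _ /=; ring. Qed.

Lemma aS_ge0 (R : realType) n (X : finType) (emb : X -> option 'I_n) (wt : X -> R) N f :
  (forall x, 0 <= wt x) ->
  (forall A, A != [set: 'I_n] -> 0 <= f A) -> 0 <= aS emb wt N f.
Proof.
move=> w0 H; apply: sumr_ge0 => s As; apply: mulr_ge0.
  by apply: prodr_ge0 => x _.
by rewrite H // alv_stt.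
Qed.

Lemma prod_div (R : realType) n (p : 'I_n -> R) q (s : seq 'I_n) : q != 0 ->
  q ^+ (size s) * \prod_(i <- s) (p i / q) = \prod_(i <- s) p i.
Proof.
move=> q0; elim: s => [|i s IH]; first by rewrite !big_nil mulr1.
rewrite !big_cons /= exprS -IH; by field.
Qed.

Lemma probC_aS (R : realType) n (p : 'I_n -> R) q N : q != 0 ->
  q ^+ N.+1 * probC q p N.+1 = aS (@Some 'I_n) p N (kil (@Some 'I_n) p).
Proof.
move=> q0; rewrite -comp_step /probC mulr_sumr; apply: eq_bigr => s _.
by rewrite -(prod_div p s q0) size_tuple.
Qed.

Lemma probC0 (R : realType) n (p : 'I_n -> R) q : (0 < n)%N -> probC q p 0 = 0.
Proof. by move=> n0; rewrite /probC (@comp0 _ _ _ (@Some _) (fun i => p i / q)). Qed.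

Lemma sigC_eq (R : realType) n (p : 'I_n -> R) rho :
  0 < rho -> (forall i, 0 < p i) -> \sum_(i < n) p i = 1 - rho ->
  forall A, A != [set: 'I_n] ->
  sig p A = 1 * kil (@Some 'I_n) p A + 1 * Pop (@Some 'I_n) p (sig p) A.
Proof.
move=> hr hp hs A hA; rewrite (sig_eq hr hp hs hA) /kil /Pop !mul1r -big_split /=.
apply: eq_bigr => i _; rewrite /nxt /=.
by case: eqP => [->|_]; rewrite ?sig_full /=; ring.
Qed.

Lemma telescopeC (R : realType) n (p : 'I_n -> R) rho :
  (0 < n)%N -> 0 < rho -> (forall i, 0 < p i) -> \sum_(i < n) p i = 1 - rho ->
  forall N, \sum_(0 <= t < N) aS (@Some 'I_n) p t (kil (@Some 'I_n) p) =
    sig p finset.set0 - aS (@Some 'I_n) p N (sig p).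
Proof.
move=> n0 hr hp hs; elim => [|N IH].
  by rewrite big_geq // aS0 // subrr.
rewrite big_nat_recr //= IH.
have -> : aS (@Some 'I_n) p N (sig p) = aS (@Some 'I_n) p N
    (fun A => 1 * kil (@Some 'I_n) p A + 1 * Pop (@Some 'I_n) p (sig p) A).
  by apply: aS_ext; exact: sigC_eq hr hp hs.
rewrite aS_lin -aS_step; ring.
Qed.

Lemma aSC_one (R : realType) n (p : 'I_n -> R) rho :
  (0 < n)%N -> 0 < rho -> (forall i, 0 < p i) -> \sum_(i < n) p i = 1 - rho ->
  forall N, aS (@Some 'I_n) p N (fun _ => 1) <= (1 - rho) ^+ N.
Proof.
move=> n0 hr hp hs.
have hq : 0 <= 1 - rho.
  by rewrite -hs; apply: sumr_ge0 => i _; apply: ltW.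
elim => [|N IH].
  by rewrite aS0 // expr0.
rewrite aS_step exprS.
have -> : aS (@Some 'I_n) p N (Pop (@Some 'I_n) p (fun=> 1)) =
          aS (@Some 'I_n) p N (fun A => 1 * (\sum_x p x - kil (@Some 'I_n) p A)).
  by apply: aS_ext => A _; rewrite Pop_const.
apply: (le_trans (y := aS (@Some 'I_n) p N (fun A => (1 - rho) * 1))).
  apply: aS_le => [x|A _]; first by apply: ltW.
  rewrite hs mul1r mulr1 lerBlDr lerDl.
  by apply: sumr_ge0 => i _; apply: mulr_ge0; [apply: ltW|apply: ler0n].
rewrite aS_scale; apply: ler_wpM2l => //.
Qed.

Definition Vf (R : realType) n (rho : R) (p : 'I_n -> R) (A : {set 'I_n}) : R :=
  (1 - sig p A) / (rho * sig p finset.set0).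

Definition Uf (R : realType) n (rho : R) (p : 'I_n -> R) N : R :=
  aS (@id (option 'I_n)) (reset_weight rho p) N (fun A => N%:R + Vf rho p A).

Lemma probT_aS (R : realType) n (rho : R) (p : 'I_n -> R) N :
  probT rho p N.+1 = aS (@id (option 'I_n)) (reset_weight rho p) N
                       (kil (@id (option 'I_n)) (reset_weight rho p)).
Proof. by rewrite -comp_step /probT; apply: eq_bigl => s; rewrite map_id. Qed.

Lemma probT0 (R : realType) n (rho : R) (p : 'I_n -> R) : (0 < n)%N -> probT rho p 0 = 0.
Proof.
move=> n0; rewrite -(@comp0 _ _ _ (@id (option 'I_n)) (reset_weight rho p) n0) /probT.
by apply: eq_bigl => s; rewrite map_id.
Qed.


Lemma wtT_sum (R : realType) n (rho : R) (p : 'I_n -> R) :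
  \sum_(i < n) p i = 1 - rho -> \sum_c reset_weight rho p c = 1.
Proof. by move=> hs; rewrite sum_option /= hs; ring. Qed.

Lemma wtT_ge0 (R : realType) n (rho : R) (p : 'I_n -> R) :
  0 < rho -> (forall i, 0 < p i) -> forall c, 0 <= reset_weight rho p c.
Proof. by move=> hr hp [i|] /=; apply: ltW. Qed.

Lemma Vf_full (R : realType) n (rho : R) (p : 'I_n -> R) : Vf rho p [set: 'I_n] = 0.
Proof. by rewrite /Vf sig_full subrr mul0r. Qed.

Lemma sig_le_q (R : realType) n (p : 'I_n -> R) rho :
  0 < rho -> (forall i, 0 < p i) -> \sum_(i < n) p i = 1 - rho ->
  forall A, A != [set: 'I_n] -> sig p A <= 1 - rho.
Proof.
move=> hr hp hs A hA; rewrite (sig_eq hr hp hs hA) -hs; apply: ler_sum => i _.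
have /andP[_ h1] := sig_bounds hr hp hs (i |: A).
by rewrite ler_piMr // ltW.
Qed.

Lemma PopT_V (R : realType) n (rho : R) (p : 'I_n -> R) :
  0 < rho -> (forall i, 0 < p i) -> \sum_(i < n) p i = 1 - rho ->
  forall A, A != [set: 'I_n] ->
  Pop (@id (option 'I_n)) (reset_weight rho p) (Vf rho p) A = Vf rho p A - 1.
Proof.
move=> hr hp hs A hA.
have /andP[s0 s1] := sig_bounds hr hp hs finset.set0.
have -> : Pop (@id (option 'I_n)) (reset_weight rho p) (Vf rho p) A =
          \sum_c reset_weight rho p c * Vf rho p (nxt (@id (option 'I_n)) A c).
  by apply: eq_bigr => c _; case: eqP => [->|_]; rewrite ?Vf_full.
rewrite sum_option /= /nxt /=.
have -> : \sum_(i < n) p i * Vf rho p (reset_step A (Some i)) =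
          ((1 - rho) - sig p A) / (rho * sig p finset.set0).
  rewrite (sig_eq hr hp hs hA) -hs -sumrB mulr_suml; apply: eq_bigr => i _ /=.
  rewrite /Vf; field; apply/andP; split; apply/lt0r_neq0 => //.
rewrite /Vf; field; apply/andP; split; apply/lt0r_neq0 => //.
Qed.

Lemma Vf_ge1 (R : realType) n (rho : R) (p : 'I_n -> R) :
  0 < rho -> (forall i, 0 < p i) -> \sum_(i < n) p i = 1 - rho ->
  forall A, A != [set: 'I_n] -> 1 <= Vf rho p A.
Proof.
move=> hr hp hs A hA.
have /andP[s0 s1] := sig_bounds hr hp hs finset.set0.
have hq := sig_le_q hr hp hs hA.
rewrite /Vf ler_pdivlMr ?mulr_gt0 // mul1r.
nra.
Qed.

Lemma Vf_ge0 (R : realType) n (rho : R) (p : 'I_n -> R) :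
  0 < rho -> (forall i, 0 < p i) -> \sum_(i < n) p i = 1 - rho ->
  forall A, 0 <= Vf rho p A.
Proof.
move=> hr hp hs A.
have /andP[s0 s1] := sig_bounds hr hp hs finset.set0.
have /andP[a0 a1] := sig_bounds hr hp hs A.
rewrite /Vf; apply: divr_ge0; first lra.
by apply: ltW; apply: mulr_gt0.
Qed.

Lemma U_step (R : realType) n (rho : R) (p : 'I_n -> R) :
  0 < rho -> (forall i, 0 < p i) -> \sum_(i < n) p i = 1 - rho ->
  forall N, Uf rho p N = N.+1%:R * aS (@id (option 'I_n)) (reset_weight rho p) N
                       (kil (@id (option 'I_n)) (reset_weight rho p)) + Uf rho p N.+1.
Proof.
move=> hr hp hs N.
rewrite {2}/Uf aS_step.
have -> : aS (@id (option 'I_n)) (reset_weight rho p) N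
   (Pop (@id (option 'I_n)) (reset_weight rho p) (fun A => N.+1%:R + Vf rho p A)) =
   aS (@id (option 'I_n)) (reset_weight rho p) N
   (fun A => 1 * (N%:R + Vf rho p A) + (- N.+1%:R) * kil (@id (option 'I_n)) (reset_weight rho p) A).
  apply: aS_ext => A hA.
  have -> : (fun A => N.+1%:R + Vf rho p A) = (fun A => N.+1%:R * 1 + 1 * Vf rho p A).
    by apply: funext => B; rewrite mulr1 mul1r.
  rewrite Pop_lin Pop_const wtT_sum // PopT_V // -addn1 natrD; ring.
rewrite aS_lin /Uf; ring.
Qed.

Lemma telescopeT (R : realType) n (rho : R) (p : 'I_n -> R) :
  (0 < n)%N -> 0 < rho -> (forall i, 0 < p i) -> \sum_(i < n) p i = 1 - rho ->
  forall N, \sum_(0 <= t < N) t.+1%:R * aS (@id (option 'I_n)) (reset_weight rho p) t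
                       (kil (@id (option 'I_n)) (reset_weight rho p)) =
   Vf rho p finset.set0 - Uf rho p N.
Proof.
move=> n0 hr hp hs; elim => [|N IH].
  by rewrite big_geq // /Uf aS0 // add0r subrr.
rewrite big_nat_recr //= IH (U_step hr hp hs N); ring.
Qed.

Lemma H_decay (R : realType) n (rho : R) (p : 'I_n -> R) :
  (0 < n)%N -> 0 < rho -> (forall i, 0 < p i) -> \sum_(i < n) p i = 1 - rho ->
  forall N, aS (@id (option 'I_n)) (reset_weight rho p) N (Vf rho p) <=
    (1 - rho * sig p finset.set0) ^+ N * Vf rho p finset.set0.
Proof.
move=> n0 hr hp hs.
have /andP[s0 s1] := sig_bounds hr hp hs finset.set0.
have hq : 0 <= 1 - rho.
  by rewrite -hs; apply: sumr_ge0 => i _; apply: ltW.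
elim => [|N IH].
  by rewrite aS0 // expr0 mul1r.
rewrite aS_step exprS -mulrA.
apply: (le_trans (y := aS (@id (option 'I_n)) (reset_weight rho p) N
     (fun A => (1 - rho * sig p finset.set0) * Vf rho p A))).
  apply: aS_le => [|A hA]; first exact: wtT_ge0.
  rewrite PopT_V //.
  have /andP[a0 a1] := sig_bounds hr hp hs A.
  rewrite /Vf; set D := rho * sig p finset.set0.
  have D0 : 0 < D by apply: mulr_gt0.
  have Dx : D * ((1 - sig p A) / D) = 1 - sig p A.
    by field; apply: lt0r_neq0.
  rewrite [X in _ <= X]mulrBl mul1r Dx; lra.
rewrite aS_scale; apply: ler_wpM2l => //; nra.
Qed.

Lemma U_bounds (R : realType) n (rho : R) (p : 'I_n -> R) :
  (0 < n)%N -> 0 < rho -> (forall i, 0 < p i) -> \sum_(i < n) p i = 1 - rho ->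
  forall N, 0 <= Uf rho p N <=
    N.+1%:R * ((1 - rho * sig p finset.set0) ^+ N * Vf rho p finset.set0).
Proof.
move=> n0 hr hp hs N; apply/andP; split.
  apply: aS_ge0 => [|A hA]; first exact: wtT_ge0.
  by apply: addr_ge0; [apply: ler0n | apply: Vf_ge0].
apply: (le_trans (y := aS (@id (option 'I_n)) (reset_weight rho p) N
     (fun A => N.+1%:R * Vf rho p A))).
  apply: aS_le => [|A hA]; first exact: wtT_ge0.
  have := Vf_ge1 hr hp hs hA; have : (0 <= N%:R :> R) by apply: ler0n.
  rewrite -addn1 natrD; nra.
rewrite aS_scale; apply: ler_wpM2l; first by apply: ler0n.
exact: H_decay.
Qed.

Local Open Scope classical_set_scope.
Local Open Scope ring_scope.

Lemma lin_geo (R : realType) (r : R) : 0 <= r -> r < 1 ->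
  (fun N : nat => N.+1%:R * r ^+ N) @ \oo --> 0.
Proof.
move=> r0 r1.
set t := Num.sqrt r.
have t0 : 0 <= t by apply: sqrtr_ge0.
have t1 : t < 1 by rewrite /t -sqrtr1 ltr_sqrt.
have tr : t ^+ 2 = r by rewrite sqr_sqrtr.
set b := 1 - t.
have b0 : 0 < b by rewrite /b; lra.
have C1 : forall N : nat, t ^+ N * (1 + N%:R * b) <= 1.
  elim => [|N IH]; first by rewrite expr0 mul0r addr0 mulr1.
  have X0 : 0 <= t ^+ N by apply: exprn_ge0.
  have N0 : (0 <= N%:R :> R) by apply: ler0n.
  rewrite exprS -addn1 natrD.
  have P1 : 0 <= b * t ^+ N * (N%:R * b) by apply: mulr_ge0; [apply: mulr_ge0|apply: mulr_ge0]; lra.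
  have P2 : 0 <= b * b * t ^+ N by apply: mulr_ge0 => //; apply: mulr_ge0; lra.
  have E : t * t ^+ N * (1 + (N%:R + 1) * b) =
     t ^+ N * (1 + N%:R * b) - b * t ^+ N * (N%:R * b) - b * b * t ^+ N by rewrite /b; ring.
  rewrite E; lra.
set K := ((1 + b) / b) ^+ 2.
apply: (@squeeze_cvgr _ _ _ _ (cst 0) (K *: @harmonic R)); last 2 first.
- exact: cvg_cst.
- by rewrite -(scaler0 _ K); exact: (cvgZl_tmp cvg_harmonic).
apply: nearW => N.
have -> : (K *: @harmonic R) N = K * N.+1%:R^-1 by [].
rewrite /cst.
have X0 : 0 <= t ^+ N by apply: exprn_ge0.
have N0 : (0 <= N%:R :> R) by apply: ler0n.
have M0 : (0 < N.+1%:R :> R) by apply: ltr0Sn.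
apply/andP; split.
  by apply: mulr_ge0; [apply: ler0n|apply: exprn_ge0].
have hr : r ^+ N = (t ^+ N) ^+ 2 by rewrite -tr exprAC.
rewrite hr.
have hC := C1 N.
have HM : N.+1%:R * t ^+ N * b <= 1 + b.
  have E : N.+1%:R = N%:R + 1 :> R by rewrite -addn1 natrD.
  rewrite E.
  have P1 : 0 <= N%:R * b * b * t ^+ N by apply: mulr_ge0 => //; apply: mulr_ge0; [apply: mulr_ge0|]; lra.
  have P2 : 0 <= t ^+ N * b by apply: mulr_ge0; lra.
  have E2 : (1 + b) * (t ^+ N * (1 + N%:R * b)) =
     (N%:R + 1) * t ^+ N * b + t ^+ N + N%:R * b * b * t ^+ N by ring.
  have : (1 + b) * (t ^+ N * (1 + N%:R * b)) <= 1 + b by rewrite ler_piMr //; lra.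
  rewrite E2. lra.
have HM2 : N.+1%:R * t ^+ N <= (1 + b) / b by rewrite ler_pdivlMr.
have HM0 : 0 <= N.+1%:R * t ^+ N by apply: mulr_ge0; lra.
rewrite /K.
rewrite ler_pdivlMr //.
have -> : N.+1%:R * (t ^+ N) ^+ 2 * N.+1%:R = (N.+1%:R * t ^+ N) ^+ 2 by ring.
rewrite -subr_ge0.
set u := N.+1%:R * t ^+ N in HM2 HM0 *.
set v := (1 + b) / b in HM2 *.
have -> : v ^+ 2 - u ^+ 2 = (v - u) * (v + u) by ring.
apply: mulr_ge0; lra.
Qed.

Theorem mainTheorem18 (R : realType) (n : nat) (rho : R) (p : 'I_n -> R) :
  (1 <= n)%N ->
  0 < rho < 1 ->
  (forall i, 0 < p i) ->
  \sum_(i < n) p i = 1 - rho ->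
  let q := 1 - rho in
  let s := phiC q p q in
  expT rho p = ((1 - s) / (rho * s))%:E.
Proof.
move=> n1 /andP[hr hr1] hp hs q s.
have q0 : 1 - rho != 0 by apply: lt0r_neq0; lra.
have /andP[s0 s1] := sig_bounds hr hp hs finset.set0.
have Hs : s = sig p finset.set0.
  rewrite /s /q /phiC; apply: cvg_lim => //.
  rewrite -cvg_shiftS.
  have -> : [sequence series (fun k => (1 - rho) ^+ k * probC (1 - rho) p k) n0.+1]_n0 =
            (fun N => sig p finset.set0 - aS (@Some 'I_n) p N (sig p)).
    apply: funext => N /=; rewrite /series /= big_nat_recl // expr0 probC0 // mulr0 add0r.
    rewrite -(telescopeC n1 hr hp hs N); apply: eq_bigr => t _; exact: probC_aS.
  suff H0 : (fun N => aS (@Some 'I_n) p N (sig p)) @ \oo --> 0.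
    have := cvgB (cvg_cst (sig p finset.set0)) H0; rewrite subr0 => HH; exact: HH.
  apply: (@squeeze_cvgr _ _ _ _ (cst 0) (fun N => (1 - rho) ^+ N)); last 2 first.
  - exact: cvg_cst.
  - by apply: cvg_expr; rewrite ger0_norm; lra.
  apply: nearW => N; apply/andP; split.
    apply: aS_ge0 => [x|A _]; first by apply: ltW.
    by have /andP[a0 _] := sig_bounds hr hp hs A; apply: ltW.
  apply: (le_trans _ (aSC_one n1 hr hp hs N)).
  apply: aS_le => [x|A _]; first by apply: ltW.
  by have /andP[_ a1] := sig_bounds hr hp hs A.
have HV : (1 - s) / (rho * s) = Vf rho p finset.set0 by rewrite /Vf Hs.
rewrite HV /expT.
have -> : (fun N => (\sum_(0 <= t < N) (t%:R * probT rho p t)%:E)%E) =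
          EFin \o (fun N => \sum_(0 <= t < N) t%:R * probT rho p t).
  by apply: funext => N; rewrite /= sumEFin.
have cv : (fun N => \sum_(0 <= t < N) t%:R * probT rho p t) @ \oo --> Vf rho p finset.set0.
  rewrite -cvg_shiftS.
  have -> : [sequence \sum_(0 <= t < n0.+1) t%:R * probT rho p t]_n0 =
            (fun N => Vf rho p finset.set0 - Uf rho p N).
    apply: funext => N /=; rewrite big_nat_recl // mul0r add0r.
    rewrite -(telescopeT n1 hr hp hs N); apply: eq_bigr => t _; by rewrite probT_aS.
  suff H0 : (fun N => Uf rho p N) @ \oo --> 0.
    have := cvgB (cvg_cst (Vf rho p finset.set0)) H0; rewrite subr0 => HH; exact: HH.
  set r := 1 - rho * sig p finset.set0.
  have r0 : 0 <= r by rewrite /r; nra.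
  have r1 : r < 1 by rewrite /r; nra.
  apply: (@squeeze_cvgr _ _ _ _ (cst 0)
           (fun N => N.+1%:R * r ^+ N * Vf rho p finset.set0)); last 2 first.
  - exact: cvg_cst.
  - rewrite -(mul0r (Vf rho p finset.set0)); apply: cvgMr_tmp; exact: lin_geo.
  apply: nearW => N; rewrite -mulrA; exact: U_bounds.
rewrite EFin_lim; last by apply/cvg_ex; exists (Vf rho p finset.set0).
by rewrite (cvg_lim _ cv).
Qed.
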